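(* Let $\mathbf i=(i_1,\dots,i_N)$ be a reduced expression of $w_0$ whose standard seed satisfies properties (A), (B) and (C). Let $l\in\{1,\dots,N\}$ and assume there exists $m\in\{1,\dots,N\}$ with $i_l\cdot i_m=-1$ and $m_-(\mathbf i)<l<m<l_+(\mathbf i)<m_+(\mathbf i)$. Then $P_l$ divides $\tilde P_l:=\beta_lP_{\mathrm{in}(l)}$.
   Context: $\mathfrak g$ is a complex simple Lie algebra of simply-laced type, vertex set $I=\{1,\dots,n\}$, Cartan entries $i\cdot j$, Weyl group with simple reflections $s_i$, longest element $w_0$, $N=\ell(w_0)$, fundamental weights $\omega_i$. $\overline D:\mathbb C[\mathsf N]\to\mathbb C(\alpha_1,\dots,\alpha_n)$ is the algebra morphism $\overline D(f)=\sum_{\mathbf j}(f,e_{j_1}\cdots e_{j_r})\big(\alpha_{j_1}(\alpha_{j_1}+\alpha_{j_2})\cdots(\alpha_{j_1}+\dots+\alpha_{j_r})\big)^{-1}$ ($\mathbb C[\mathsf N]$ identified with the graded dual of $U(\mathfrak n)$, $e_i$ Chevalley generators, $\alpha_i$ indeterminates). Positive roots are linear forms in the $\alpha_i$; $(\beta;P)$ = multiplicity of $\beta$ in $P$. For a reduced expression $\mathbf i$: $\beta_j=s_{i_1}\cdots s_{i_{j-1}}(\alpha_{i_j})$; $j_-(\mathbf i)=\max(\{l<j:i_l=i_j\}\cup\{0\})$; $j_+(\mathbf i)=\min(\{l>j:i_l=i_j\}\cup\{N+1\})$; $J_{ex}(\mathbf i)=\{j:j_+\le N\}$; flag minors $x_j=D(s_{i_1}\cdots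 s_{i_j}\omega_{i_j},\omega_{i_j})$. The quiver $Q^{\mathbf i}$ on $\{1,\dots,N\}$ has an ordinary arrow $u\to v$ iff $i_u\cdot i_v=-1$ and $u<v<u_+<v_+$, and a horizontal arrow $u_+\to u$ for each $u\in J_{ex}$. For $j\in J_{ex}$, $\mathrm{inord}(j)$ is the set of sources of ordinary arrows into $j$ and $P_{\mathrm{in}(j)}:=P_{j_+}\prod_{l\in\mathrm{inord}(j)}P_l$. Properties: (A) $\overline D(x_j)=1/P_j$ with $P_j$ a product of positive roots, all $j$; (B) $P_jP_{j_-}=\beta_j\prod_{l<j<l_+,\,i_l\cdot i_j=-1}P_l$ for all $j$, with $P_0=1$; (C) $(\beta_i;P_j)-(\beta_i;P_{j_+})\le1$ for all $j\in J_{ex}$, $1\le i\le N$. *)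

(* Defs.v *)
From HB Require Import structures.
From mathcomp Require Import all_boot all_order all_algebra.
From mathcomp Require Import mpoly.
Set Implicit Arguments. Unset Strict Implicit. Unset Printing Implicit Defensive.
Import Order.TTheory GRing.Theory Num.Theory.
Local Open Scope ring_scope.

(* The rank is r = n.+1 (vertex set I = 'I_n.+1, i.e. {1..r} shifted to {0..r-1}).
   C : 'M[int]_n.+1 is the Cartan matrix, C i j = i . j. *)

(* C is the Cartan matrix of a simply-laced complex simple Lie algebra
   (types A, D, E): symmetric, 2 on the diagonal, 0/-1 off the diagonal,
   positive definite (finite type) and indecomposable (simple). *)
Definition simply_laced_simple_cartan (n : nat) (C : 'M[int]_n.+1) : Prop :=
  [/\ forall i, C i i = 2,
      forall i j, i != j -> C i j = 0 \/ C i j = -1,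
      C^T = C,
      (forall v : 'rV[rat]_n.+1, v != 0 ->
          0 < (v *m map_mx (fun z : int => z%:~R) C *m v^T) 0 0)
    & forall S : {set 'I_n.+1}, S != set0 -> S != setT ->
          exists i j, [/\ i \in S, j \notin S & C i j != 0] ].

(* Elements of the root lattice: coefficient vectors w.r.t. the simple roots. *)
Definition simple_root (n : nat) (i : 'I_n.+1) : 'rV[int]_n.+1 :=
  \row_k (k == i)%:R.

Definition refl (n : nat) (C : 'M[int]_n.+1) (i : 'I_n.+1) (v : 'rV[int]_n.+1)
  : 'rV[int]_n.+1 := v - (v *m C) 0 i *: simple_root i.

Definition wact (n : nat) (C : 'M[int]_n.+1) (w : seq 'I_n.+1) (v : 'rV[int]_n.+1)
  : 'rV[int]_n.+1 := foldr (refl C) v w.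

Definition weq (n : nat) (C : 'M[int]_n.+1) (w w' : seq 'I_n.+1) : Prop :=
  forall v, wact C w v = wact C w' v.

Definition reduced (n : nat) (C : 'M[int]_n.+1) (w : seq 'I_n.+1) : Prop :=
  forall w', weq C w' w -> (size w <= size w')%N.

(* w is a reduced expression of the longest element w0 of the Weyl group:
   it is reduced and its length is maximal among lengths of Weyl group elements *)
Definition reduced_expr_w0 (n : nat) (C : 'M[int]_n.+1) (w : seq 'I_n.+1) : Prop :=
  reduced C w /\ forall w', reduced C w' -> (size w' <= size w)%N.

Definition positive_root (n : nat) (C : 'M[int]_n.+1) (v : 'rV[int]_n.+1) : Prop :=
  (exists (w : seq 'I_n.+1) (i : 'I_n.+1), wact C w (simple_root i) = v)
  /\ forall k, 0 <= v 0 k.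

(* Positions in the word are 1-based: letter j = i_j for 1 <= j <= N = size w *)
Definition letter (n : nat) (w : seq 'I_n.+1) (j : nat) : 'I_n.+1 :=
  nth ord0 w j.-1.

Definition beta (n : nat) (C : 'M[int]_n.+1) (w : seq 'I_n.+1) (j : nat)
  : 'rV[int]_n.+1 := wact C (take j.-1 w) (simple_root (letter w j)).

Definition jminus (n : nat) (w : seq 'I_n.+1) (j : nat) : nat :=
  \max_(1 <= l < j | letter w l == letter w j) l.

Definition jplus (n : nat) (w : seq 'I_n.+1) (j : nat) : nat :=
  \big[minn/(size w).+1]_(j.+1 <= l < (size w).+1 | letter w l == letter w j) l.

Definition ord_arrow (n : nat) (C : 'M[int]_n.+1) (w : seq 'I_n.+1) (u v : nat)
  : bool :=
  [&& (1 <= u <= size w)%N, (1 <= v <= size w)%N,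
      C (letter w u) (letter w v) == -1 &
      [&& (u < v)%N, (v < jplus w u)%N & (jplus w u < jplus w v)%N]].

Definition inord (n : nat) (C : 'M[int]_n.+1) (w : seq 'I_n.+1) (j : nat)
  : seq nat := [seq u <- iota 1 (size w) | ord_arrow C w u j].

(* a positive root, as a linear form in the indeterminates alpha_k *)
Definition linform (n : nat) (b : 'rV[int]_n.+1) : {mpoly rat[n.+1]} :=
  \sum_(k < n.+1) (b 0 k)%:~R *: 'X_k.

(* P_j, given as the list of its positive-root factors; P_0 = 1 *)
Definition Ppoly (n : nat) (P : nat -> seq 'rV[int]_n.+1) (j : nat)
  : {mpoly rat[n.+1]} :=
  if j is 0 then 1 else \prod_(b <- P j) linform b.

Definition Pin (n : nat) (C : 'M[int]_n.+1) (w : seq 'I_n.+1)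
  (P : nat -> seq 'rV[int]_n.+1) (j : nat) : {mpoly rat[n.+1]} :=
  Ppoly P (jplus w j) * \prod_(l <- inord C w j) Ppoly P l.

(* Property (A) (algebraic part): each P_j, 1 <= j <= N, is a product of
   positive roots. *)
Definition propA (n : nat) (C : 'M[int]_n.+1) (w : seq 'I_n.+1)
  (P : nat -> seq 'rV[int]_n.+1) : Prop :=
  forall j, (1 <= j <= size w)%N -> forall b, b \in P j -> positive_root C b.

Definition propB (n : nat) (C : 'M[int]_n.+1) (w : seq 'I_n.+1)
  (P : nat -> seq 'rV[int]_n.+1) : Prop :=
  forall j, (1 <= j <= size w)%N ->
    Ppoly P j * Ppoly P (jminus w j)
    = linform (beta C w j) *
      \prod_(1 <= l < (size w).+1 |
               [&& (l < j)%N, (j < jplus w l)%N & C (letter w l) (letter w j) == -1])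
        Ppoly P l.

Definition propC (n : nat) (C : 'M[int]_n.+1) (w : seq 'I_n.+1)
  (P : nat -> seq 'rV[int]_n.+1) : Prop :=
  forall j, (1 <= j)%N -> (jplus w j <= size w)%N ->
    forall i, (1 <= i <= size w)%N ->
      (count_mem (beta C w i) (P j) <= count_mem (beta C w i) (P (jplus w j)) + 1)%N.

(* Main.v *)
Require Import Defs.
From HB Require Import structures.
From mathcomp Require Import all_boot all_order all_algebra.
From mathcomp Require Import mpoly.
From mathcomp Require Import ring zify.
Import Order.TTheory GRing.Theory Num.Theory.
Local Open Scope ring_scope.
Set Implicit Arguments. Unset Strict Implicit. Unset Printing Implicit Defensive.

Section Lin.
Variable n : nat.
Implicit Types u v : 'rV[int]_n.+1.

Lemma sum_delta (R : pzSemiRingType) (F : 'I_n.+1 -> R) k :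
  \sum_i F i * (i == k)%:R = F k.
Proof.
rewrite (bigD1 k) //= eqxx mulr1 big1 ?addr0 // => i /negbTE ->.
by rewrite mulr0.
Qed.

Lemma mcoeff_linform v k : (linform v)@_U_(k) = (v 0 k)%:~R.
Proof.
rewrite /linform raddf_sum /=.
rewrite (eq_bigr (fun i => (v 0 i)%:~R * (i == k)%:R)); last first.
  by move=> i _; rewrite mcoeffZ mcoeffXU.
by rewrite sum_delta.
Qed.

Lemma linform_inj u v : linform u = linform v -> u = v.
Proof.
move=> e; apply/rowP => k; apply: (@intr_inj rat).
by rewrite -!mcoeff_linform e.
Qed.

Lemma linformZ a v : linform (a *: v) = a%:~R *: linform v.
Proof.
rewrite /linform scaler_sumr; apply: eq_bigr => i _.
by rewrite !mxE intrM scalerA.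
Qed.

Lemma linform0 : linform (0 : 'rV[int]_n.+1) = 0.
Proof. by rewrite /linform big1 // => i _; rewrite mxE scale0r. Qed.

Lemma linform_neq0 u : u != 0 -> linform u != 0.
Proof.
by apply: contra => /eqP e; apply/eqP; apply: linform_inj; rewrite e linform0.
Qed.

Definition ev (p : {mpoly rat[n.+1]}) : rat := meval (fun _ => 1) p.

Lemma ev_linform v : ev (linform v) = (\sum_k v 0 k)%:~R.
Proof.
rewrite /ev /linform raddf_sum /= rmorph_sum /=; apply: eq_bigr => i _.
by rewrite mevalZ mevalXU mulr1.
Qed.

Lemma ev_prod (I : Type) (r : seq I) (F : I -> {mpoly rat[n.+1]}) :
  ev (\prod_(i <- r) F i) = \prod_(i <- r) ev (F i).
Proof.
elim: r => [|a r IH]; first by rewrite !big_nil /ev meval1.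
by rewrite !big_cons /ev mevalM -IH.
Qed.

(* substitution killing linform u *)
Section Subst.
Variables (u : 'rV[int]_n.+1) (k : 'I_n.+1).
Definition sig (i : 'I_n.+1) : {mpoly rat[n.+1]} :=
  'X_i - (((i == k)%:R : rat) * ((u 0 k)%:~R)^-1) *: linform u.
Definition phi (p : {mpoly rat[n.+1]}) := p \mPo [tuple sig i | i < n.+1].

Lemma phi_linform v :
  phi (linform v) = linform v - ((v 0 k)%:~R * ((u 0 k)%:~R)^-1) *: linform u.
Proof.
rewrite /phi /linform raddf_sum /=.
rewrite (eq_bigr (fun i => (v 0 i)%:~R *: 'X_i -
    ((v 0 i)%:~R * (((i == k)%:R : rat) * ((u 0 k)%:~R)^-1)) *: linform u)); last first.
  move=> i _; rewrite comp_mpolyZ comp_mpolyXU -(tnth_nth 0) tnth_mktuple.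
  by rewrite /sig scalerBr scalerA.
rewrite sumrB -scaler_suml; congr (_ - _ *: _).
rewrite -[RHS](@sum_delta _ (fun i => (v 0 i)%:~R * ((u 0 k)%:~R)^-1)).
by apply: eq_bigr => i _; rewrite mulrA mulrAC.
Qed.

Lemma phi_prod (I : Type) (r : seq I) (F : I -> {mpoly rat[n.+1]}) :
  phi (\prod_(i <- r) F i) = \prod_(i <- r) phi (F i).
Proof. by rewrite /phi rmorph_prod. Qed.

Lemma phiM p q : phi (p * q) = phi p * phi q.
Proof. by rewrite /phi rmorphM. Qed.

Lemma phi1 : phi 1 = 1.
Proof. by rewrite /phi comp_mpoly1. Qed.

Lemma phiC c : phi c%:MP = c%:MP.
Proof. by rewrite /phi comp_mpolyC. Qed.

Hypothesis uk : u 0 k != 0.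

Lemma phi_u : phi (linform u) = 0.
Proof.
rewrite phi_linform mulfV ?scale1r ?subrr //.
by rewrite intr_eq0.
Qed.

Lemma phi_zero v : phi (linform v) = 0 -> (u 0 k) *: v = (v 0 k) *: u.
Proof.
rewrite phi_linform => /eqP; rewrite subr_eq0 => /eqP e.
apply: linform_inj; rewrite !linformZ e scalerA mulrCA mulfV ?mulr1 //.
by rewrite intr_eq0.
Qed.
End Subst.

End Lin.

Section UFD.
Variable n : nat.
Variable G : 'rV[int]_n.+1 -> Prop.
Hypothesis HG0 : forall u, G u -> u != 0.
Hypothesis HGeq : forall u v (a b : int), G u -> G v -> a != 0 -> a *: u = b *: v -> u = v.

Lemma nz_coord (u : 'rV[int]_n.+1) : u != 0 -> exists k, u 0 k != 0.
Proof.
move=> nz; case: (pickP (fun k => u 0 k != 0)) => [k hk|h]; first by exists k.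
move/eqP: nz; case; apply/rowP => k; rewrite mxE.
by move: (h k) => /negbFE/eqP.
Qed.

Lemma kill_mem u k (s : seq 'rV[int]_n.+1) :
  G u -> u 0 k != 0 -> {in s, forall x, G x} ->
  phi u k (\prod_(b <- s) linform b) = 0 -> u \in s.
Proof.
move=> Gu uk Gs; rewrite phi_prod => /eqP; rewrite prodf_seq_eq0 => /hasP [b bs].
move=> /eqP /(phi_zero uk) e.
by have <- := HGeq (Gs b bs) Gu uk e.
Qed.

Lemma ufd (s1 : seq 'rV[int]_n.+1) : forall s2 (c : rat),
  {in s1, forall x, G x} -> {in s2, forall x, G x} -> c != 0 ->
  \prod_(b <- s1) linform b = c%:MP * \prod_(b <- s2) linform b ->
  perm_eq s1 s2.
Proof.
elim: s1 => [|u r1 IH] s2 c G1 G2 c0 E.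
  case: s2 E G2 => [|b r2] // E G2.
  have Gb : G b by apply: G2; rewrite inE eqxx.
  have [k bk] := nz_coord (HG0 Gb).
  have := congr1 (phi b k) E.
  rewrite big_nil phi1 phiM phi_prod big_cons.
  by rewrite phi_u // mul0r mulr0 => /eqP; rewrite oner_eq0.
have Gu : G u by apply: G1; rewrite inE eqxx.
have [k uk] := nz_coord (HG0 Gu).
have us2 : u \in s2.
  apply: (kill_mem Gu uk G2).
  have := congr1 (phi u k) E.
  rewrite big_cons !phiM phi_u // mul0r => /esym/eqP.
  rewrite mulf_eq0 => /orP [|/eqP //].
  by rewrite phiC mpolyC_eq0 (negbTE c0).
move: E; rewrite (big_rem u us2) big_cons /= mulrCA => /(mulfI (linform_neq0 (HG0 Gu))) E.
have H1 : {in r1, forall x, G x}.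
  by move=> x xr; apply: G1; rewrite inE xr orbT.
have H2 : {in rem u s2, forall x, G x} by move=> x /mem_rem; apply: G2.
have := IH (rem u s2) c H1 H2 c0 E.
rewrite -(perm_cons u) => /perm_trans; apply.
by rewrite perm_sym perm_to_rem.
Qed.
End UFD.

Section Norm.
Variable n : nat.
Variable C : 'M[int]_n.+1.
Hypothesis Csym : C^T = C.
Hypothesis Cd : forall i, C i i = 2.
Implicit Types u v : 'rV[int]_n.+1.

Lemma mxB00 (A B : 'M[int]_1) : (A - B) 0 0 = A 0 0 - B 0 0.
Proof. by rewrite !mxE. Qed.
Lemma mxZ00 a (A : 'M[int]_1) : (a *: A) 0 0 = a * A 0 0.
Proof. by rewrite !mxE. Qed.

Definition bf u v := (u *m C *m v^T) 0 0.

Lemma bfBl u u' v : bf (u - u') v = bf u v - bf u' v.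
Proof. by rewrite /bf !mulmxBl mxB00. Qed.
Lemma bfBr u v v' : bf u (v - v') = bf u v - bf u v'.
Proof.
rewrite /bf; have -> : (v - v')^T = v^T - v'^T by apply/matrixP => i j; rewrite !mxE.
by rewrite /bf mulmxBr mxB00.
Qed.
Lemma bfZl a u v : bf (a *: u) v = a * bf u v.
Proof. by rewrite /bf -!scalemxAl mxZ00. Qed.
Lemma bfZr a u v : bf u (a *: v) = a * bf u v.
Proof.
rewrite /bf; have -> : (a *: v)^T = a *: v^T by apply/matrixP => i j; rewrite !mxE.
by by rewrite -scalemxAr mxZ00.
Qed.
Lemma bf_sym u v : bf u v = bf v u.
Proof.
rewrite /bf -[in LHS](trmxK (u *m C *m v^T)) [in LHS]mxE.
by rewrite !trmx_mul trmxK Csym mulmxA.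
Qed.
Lemma mul_e (X : 'rV[int]_n.+1) i : (X *m (simple_root i)^T) 0 0 = X 0 i.
Proof.
rewrite mxE (bigD1 i) //= big1 => [|k nk]; rewrite !mxE.
  by rewrite eqxx mulr1 addr0.
by rewrite (negbTE nk) mulr0.
Qed.
Lemma bf_e u i : bf u (simple_root i) = (u *m C) 0 i.
Proof. by rewrite /bf mul_e. Qed.
Lemma bf_ee i : bf (simple_root i) (simple_root i) = 2.
Proof.
rewrite bf_e mxE (bigD1 i) //= big1 => [|k nk]; rewrite !mxE.
  by rewrite eqxx mul1r addr0 Cd.
by rewrite (negbTE nk) mul0r.
Qed.

Lemma bf_refl i v : bf (refl C i v) (refl C i v) = bf v v.
Proof.
rewrite /refl bfBl !bfBr !bfZl !bfZr bf_ee (bf_sym (simple_root i) v) bf_e.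
ring.
Qed.

Lemma bf_wact ws i : bf (wact C ws (simple_root i)) (wact C ws (simple_root i)) = 2.
Proof. by elim: ws => [|j ws IH] /=; [rewrite bf_ee | rewrite bf_refl]. Qed.

Definition good v := bf v v = 2 /\ 0 < \sum_k v 0 k.

Lemma good_neq0 v : good v -> v != 0.
Proof.
case=> h _; apply/eqP => e; move: h; rewrite e /bf mul0mx mxE.
by rewrite big1 // => k _; rewrite mxE mul0r.
Qed.

Lemma good_eq u v (a b : int) : good u -> good v -> a != 0 -> a *: u = b *: v -> u = v.
Proof.
move=> [qu su] [qv sv] a0 e.
have q : a * (a * 2) = b * (b * 2).
  by have := congr1 (fun x => bf x x) e; rewrite /= !bfZl !bfZr qu qv.
have s : a * (\sum_k u 0 k) = b * (\sum_k v 0 k).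
  have := congr1 (fun x : 'rV[int]_n.+1 => \sum_k x 0 k) e; rewrite /= !mulr_sumr.
  by under eq_bigr do rewrite mxE; under [RHS]eq_bigr do rewrite mxE.
have ab : a = b.
  move: (\sum_k u 0 k) (\sum_k v 0 k) su sv s q a0 => x y x0 y0 s q a0.
  have h1 : (a - b) * (a + b) * 2 = 0.
    by transitivity (a*(a*2) - b*(b*2)); [ring | rewrite q subrr].
  move/eqP: h1; rewrite !mulf_eq0 orbF => /orP [/eqP|/eqP h]; first by move/subr0_eq.
  have hb : b = - a by apply/eqP; rewrite -addr_eq0 addrC h.
  move: s; rewrite hb mulNr => /eqP; rewrite -addr_eq0 -mulrDr mulf_eq0 (negbTE a0) /=.
  by rewrite gt_eqF // addr_gt0.
subst b; apply/rowP => k; have := congr1 (fun x : 'rV[int]_n.+1 => x 0 k) e; rewrite /= !mxE.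
exact: mulfI.
Qed.

Lemma wact_good_or ws i : 0 < \sum_k (wact C ws (simple_root i)) 0 k ->
  good (wact C ws (simple_root i)).
Proof. by move=> h; split => //; apply: bf_wact. Qed.

Lemma good_of_bf v : bf v v = 2 -> (forall k, 0 <= v 0 k) -> good v.
Proof.
move=> q nn; split => //; rewrite lt_def sumr_ge0 ?andbT; last by move=> k _.
apply/eqP => /psumr_eq0P h.
have v0 : v = 0 by apply/rowP => k; rewrite mxE h.
by move: q; rewrite v0 /bf mul0mx mxE big1 // => k _; rewrite mxE mul0r.
Qed.

Lemma posroot_good v : positive_root C v -> good v.
Proof.
move=> [[ws [i e]] nn]; apply: good_of_bf => //.
by rewrite -e bf_wact.
Qed.
End Norm.

Section Word.
Variable n : nat.
Variable w : seq 'I_n.+1.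
Local Notation N := (size w).
Local Open Scope nat_scope.

Lemma bigmin_spec a b (P : pred nat) :
  let x := \big[minn/b]_(a <= l < b | P l) l in
  (x = b \/ (a <= x < b /\ P x)) /\ (forall l, a <= l < b -> P l -> x <= l).
Proof.
split.
  rewrite big_seq_cond.
  apply: (big_ind (fun x => x = b \/ (a <= x < b /\ P x))) => [|x y hx hy|l /andP [hl pl]].
  - by left.
  - by rewrite /minn; case: ltnP.
  - by right; rewrite mem_index_iota in hl.
move=> l hl pl; rewrite -mem_index_iota in hl.
elim: (index_iota a b) hl => [|c r IH] //; rewrite inE big_cons => /orP [/eqP <-|lr].
  by rewrite pl geq_minl.
case: (P c); last exact: IH.
by rewrite geq_min IH ?orbT.
Qed.

Lemma bigmax_spec a b (P : pred nat) :
  let x := \max_(a <= l < b | P l) l in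
  (x = 0 \/ (a <= x < b /\ P x)) /\ (forall l, a <= l < b -> P l -> l <= x).
Proof.
split.
  rewrite big_seq_cond.
  apply: (big_ind (fun x => x = 0 \/ (a <= x < b /\ P x))) => [|x y hx hy|l /andP [hl pl]].
  - by left.
  - by rewrite /maxn; case: ltnP.
  - by right; rewrite mem_index_iota in hl.
move=> l hl pl; apply: (leq_bigmax_seq (F := id)) => //.
by rewrite mem_index_iota.
Qed.

Lemma jplus_spec j :
  (jplus w j = N.+1 \/ (j < jplus w j <= N /\ letter w (jplus w j) = letter w j)) /\
  (forall k, j < k <= N -> letter w k = letter w j -> jplus w j <= k).
Proof.
have [h1 h2] := bigmin_spec j.+1 N.+1 (fun l => letter w l == letter w j).
rewrite /jplus; split.
  case: h1 => [->|[hx /eqP px]]; first by left.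
  by right; rewrite px; split.
by move=> k hk hl; apply: h2 => //; apply/eqP.
Qed.

Lemma jminus_spec j :
  (jminus w j = 0 \/ (1 <= jminus w j < j /\ letter w (jminus w j) = letter w j)) /\
  (forall k, 1 <= k < j -> letter w k = letter w j -> k <= jminus w j).
Proof.
have [h1 h2] := bigmax_spec 1 j (fun l => letter w l == letter w j).
rewrite /jminus; split.
  case: h1 => [->|[hx /eqP px]]; first by left.
  by right; rewrite px; split.
by move=> k hk hl; apply: h2 => //; apply/eqP.
Qed.

Lemma jplus_le j : jplus w j <= N.+1.
Proof.
have [[->|[/andP [_ h] _]] _] := jplus_spec j => //.
exact: leqW.
Qed.

Lemma jplus_gt j : j <= N -> j < jplus w j.
Proof.
move=> jN; have [[->|[/andP [h _] _]] _] := jplus_spec j => //.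
Qed.

Lemma letter_jplus j : jplus w j <= N -> letter w (jplus w j) = letter w j.
Proof.
have [[->|[_ h] _]] := jplus_spec j => //.
by rewrite ltnn.
Qed.

Lemma jminus_lt j : 1 <= j -> jminus w j < j.
Proof.
move=> j1; have [[->|[/andP [_ h] _]] _] := jminus_spec j => //.
Qed.

Lemma letter_jminus j : 1 <= jminus w j -> letter w (jminus w j) = letter w j.
Proof.
have [[->|[_ h] _]] := jminus_spec j => //.
Qed.

Lemma jminus_jplus l : 1 <= l -> jplus w l <= N -> jminus w (jplus w l) = l.
Proof.
move=> l1 lpN.
have [[e|[/andP [ll _] lt] ] hmin] := jplus_spec l; first by rewrite e ltnn in lpN.
have [[e2|[/andP [x1 xl] xlet]] hmax] := jminus_spec (jplus w l).
  by have := hmax l; rewrite l1 ll lt e2 leqn0 => /(_ isT erefl) /eqP l0; rewrite l0 in l1.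
apply/eqP; rewrite eqn_leq hmax ?l1 ?ll // andbT leqNgt; apply/negP => lx.
have := hmin (jminus w (jplus w l)); rewrite lx (leq_trans (ltnW xl) lpN) xlet lt.
by move=> /(_ isT erefl); rewrite leqNgt xl.
Qed.

Lemma jplus_jminus m : 1 <= jminus w m -> m <= N -> jplus w (jminus w m) = m.
Proof.
move=> x1 mN.
have [[e|[/andP [x1' xm] xlet]] hmax] := jminus_spec m; first by rewrite e in x1.
have [[e2|[/andP [xy yN] ylet]] hmin] := jplus_spec (jminus w m).
  by have := hmin m; rewrite xm mN xlet e2 => /(_ isT erefl); rewrite ltnNge mN.
apply/eqP; rewrite eqn_leq hmin ?xm ?mN ?xlet // leqNgt; apply/negP => ym.
have := hmax (jplus w (jminus w m)); rewrite ym ylet xlet (leq_trans _ xy) //.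
by move=> /(_ isT erefl); rewrite leqNgt xy.
Qed.
End Word.

Lemma sum_sub (r : seq nat) (P Q : pred nat) (f : nat -> nat) :
  (forall k, k \in r -> P k -> Q k) ->
  (\sum_(k <- r | P k) f k <= \sum_(k <- r | Q k) f k)%N.
Proof.
move=> H; rewrite [X in (_ <= X)%N](bigID P) /=; apply: leq_trans (leq_addr _ _).
rewrite big_seq_cond [X in (_ <= X)%N]big_seq_cond; apply: eq_leq; apply: eq_bigl => k.
case kr: (k \in r); case pk: (P k); rewrite /= ?andbT ?andbF //.
by rewrite (H k kr pk).
Qed.

Lemma sum_elem (r : seq nat) (P : pred nat) (f : nat -> nat) x :
  x \in r -> P x -> (f x <= \sum_(k <- r | P k) f k)%N.
Proof. by move=> xr px; rewrite (big_rem x) //= px leq_addr. Qed.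

Lemma count_flat (T : eqType) (f : nat -> seq T) (s : seq nat) (a : pred T) :
  count a (flatten (map f s)) = (\sum_(k <- s) count a (f k))%N.
Proof. by elim: s => [|k s IH]; rewrite ?big_nil ?big_cons //= count_cat IH. Qed.

Lemma prod_flat n (f : nat -> seq 'rV[int]_n.+1) (s : seq nat) :
  \prod_(b <- flatten (map f s)) linform b =
  \prod_(k <- s) \prod_(b <- f k) linform b.
Proof. by rewrite big_flatten big_map. Qed.

Lemma sub_multiset (T : eqType) (s t : seq T) :
  (forall x, count_mem x s <= count_mem x t)%N -> exists r, perm_eq t (s ++ r).
Proof.
elim: s t => [|x s IH] t H; first by exists t.
have xt : x \in t by rewrite -has_pred1 has_count; apply: leq_trans (H x); rewrite /= eqxx.
have Pt := perm_to_rem xt.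
have [r Hr] : exists r, perm_eq (rem x t) (s ++ r).
  apply: IH => y; have := H y; rewrite (permP Pt) /=.
  by rewrite leq_add2l.
exists r; apply: perm_trans Pt _; by rewrite /= perm_cons.
Qed.

Section Main.
Variable n : nat.
Variable C : 'M[int]_n.+1.
Variable w : seq 'I_n.+1.
Variable P : nat -> seq 'rV[int]_n.+1.
Hypothesis Csym : C^T = C.
Hypothesis Cd : forall i, C i i = 2.
Hypothesis hA : propA C w P.
Hypothesis hB : propB C w P.
Local Notation N := (size w).

Definition PL j := if j is 0 then [::] else P j.

Lemma Ppoly_PL j : Ppoly P j = \prod_(b <- PL j) linform b.
Proof. by case: j => [|j] //=; rewrite big_nil. Qed.

Lemma PL_pos j : (1 <= j)%N -> PL j = P j.
Proof. by case: j. Qed.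

Lemma C_sym a b : C a b = C b a.
Proof. by rewrite -{1}Csym mxE. Qed.

Lemma good_PL j x : (j <= N)%N -> x \in PL j -> good C x.
Proof.
case: j => [|j] //= jN xin; apply: posroot_good => //.
by apply: (hA (j := j.+1)) => //.
Qed.

Lemma ev_Ppoly j : (j <= N)%N -> 0 < ev (Ppoly P j).
Proof.
move=> jN; rewrite Ppoly_PL ev_prod big_seq; apply: prodr_gt0 => x xin.
rewrite ev_linform ltr0z; by case: (good_PL jN xin).
Qed.

Lemma iotaE : index_iota 1 N.+1 = iota 1 N.
Proof. by rewrite /index_iota subn1. Qed.

Definition Sf j k := [&& (k < j)%N, (j < jplus w k)%N & C (letter w k) (letter w j) == -1].

Lemma hB' j : (1 <= j <= N)%N ->
  Ppoly P j * Ppoly P (jminus w j) =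
  linform (beta C w j) * \prod_(k <- iota 1 N | Sf j k) Ppoly P k.
Proof. by move=> hj; rewrite -iotaE hB. Qed.

Lemma beta_good j : (1 <= j <= N)%N -> good C (beta C w j).
Proof.
move=> hj; split; first by rewrite /beta bf_wact.
have := congr1 (@ev n) (hB' hj).
have jmN : (jminus w j <= N)%N.
  case/andP: hj => j1 jN; exact: leq_trans (ltnW (jminus_lt w j1)) jN.
rewrite /ev !mevalM -!/(ev _).
have p1 : 0 < ev (Ppoly P j) * ev (Ppoly P (jminus w j)).
  by rewrite mulr_gt0 // ev_Ppoly //; case/andP: hj.
have p2 : 0 < ev (\prod_(k <- iota 1 N | Sf j k) Ppoly P k).
  rewrite big_seq_cond (big_morph (@ev n) (fun x y => mevalM _ x y) (meval1 _)).
  apply: prodr_gt0 => k /andP [kin _]; apply: ev_Ppoly.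
  by move: kin; rewrite mem_iota add1n ltnS => /andP [].
move=> e; move: p1; rewrite e pmulr_lgt0 // ev_linform ltr0z //.
Qed.

Lemma Bm (g : 'rV[int]_n.+1) j : (1 <= j <= N)%N ->
  (count_mem g (PL j) + count_mem g (PL (jminus w j)) =
   (beta C w j == g) + \sum_(k <- iota 1 N | Sf j k) count_mem g (PL k))%N.
Proof.
move=> hj.
have jmN : (jminus w j <= N)%N.
  case/andP: hj => j1 jN; exact: leq_trans (ltnW (jminus_lt w j1)) jN.
have jN : (j <= N)%N by case/andP: hj.
have E := hB' hj.
set s1 := PL j ++ PL (jminus w j).
set s2 := beta C w j :: flatten (map PL [seq k <- iota 1 N | Sf j k]).
have pe : perm_eq s1 s2.
  apply: (@ufd n (good C) (@good_neq0 n C) (@good_eq n C) s1 s2 1).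
  - by move=> x; rewrite mem_cat => /orP [] xin; [apply: (good_PL jN xin) | apply: (good_PL jmN xin)].
  - move=> x; rewrite inE => /orP [/eqP ->|]; first exact: beta_good.
    move/flatten_mapP => [k]; rewrite mem_filter mem_iota add1n ltnS => /andP [_ /andP [_ kN]].
    by move=> xin; apply: (good_PL kN xin).
  - exact: oner_neq0.
  rewrite mpolyC1 mul1r big_cat /= -!Ppoly_PL E big_cons prod_flat big_filter.
  by congr (_ * _); apply: eq_bigr => k _; rewrite Ppoly_PL.
have := (permP pe) (pred1 g); rewrite count_cat /= count_flat big_filter.
by move=> ->; rewrite eq_sym.
Qed.

Lemma zero_mult (g : 'rV[int]_n.+1) :
  (forall i, (1 <= i <= N)%N -> beta C w i != g) ->
  forall j, (j <= N)%N -> count_mem g (PL j) = 0%N.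
Proof.
move=> H j; elim/ltn_ind: j => -[|j] IH jN //.
have hj : (1 <= j.+1 <= N)%N by rewrite jN.
have := Bm g hj; rewrite (negbTE (H _ hj)) add0n big1_seq.
  by move/eqP; rewrite addn_eq0 => /andP [/eqP].
move=> k /andP [/andP [kj _] _]; apply: IH => //.
exact: leq_trans (ltnW kj) jN.
Qed.
End Main.

Section Main2.
Variable n : nat.
Variable C : 'M[int]_n.+1.
Variable w : seq 'I_n.+1.
Variable P : nat -> seq 'rV[int]_n.+1.
Hypothesis Csym : C^T = C.
Hypothesis Cd : forall i, C i i = 2.
Hypothesis hA : propA C w P.
Hypothesis hB : propB C w P.
Hypothesis hC : propC C w P.
Local Notation N := (size w).
Local Notation PL := (PL P).
Local Notation Sf := (Sf C w).

Definition Lfull l := beta C w l :: (PL (jplus w l) ++ flatten (map PL (Defs.inord C w l))).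

Variables l m : nat.
Hypothesis hl : (1 <= l <= N)%N.
Hypothesis hm : (1 <= m <= N)%N.
Hypothesis Clm : C (letter w l) (letter w m) = -1.
Hypothesis h1 : (jminus w m < l)%N.
Hypothesis h2 : (l < m)%N.
Hypothesis h3 : (m < jplus w l)%N.
Hypothesis h4 : (jplus w l < jplus w m)%N.

Lemma main_count g : (count_mem g (PL l) <= count_mem g (Lfull l))%N.
Proof.
rewrite /Lfull /= count_cat count_flat.
have lpN : (jplus w l <= N)%N by rewrite -ltnS; exact: leq_trans h4 (jplus_le w m).
case/andP: hl => l1 lN; case/andP: hm => m1 mN.
have lp1 : (1 <= jplus w l)%N by exact: leq_trans l1 (ltnW (jplus_gt lN)).
have hlp : (1 <= jplus w l <= N)%N by rewrite lp1 lpN.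
have letlp := letter_jplus lpN.
have jmlp : jminus w (jplus w l) = l := jminus_jplus l1 lpN.
have CS := C_sym Csym.
case: (boolP (has (fun i => beta C w i == g) (iota 1 N))) => [/hasP [i iin /eqP bi] | /hasPn hn];
  last first.
  rewrite (zero_mult Csym Cd hA hB _ lN) // => i hi; apply: hn.
  by rewrite mem_iota add1n ltnS.
have hi : (1 <= i <= N)%N by move: iin; rewrite mem_iota add1n ltnS.
have Cl := hC l1 lpN hi; rewrite bi -(PL_pos P l1) -(PL_pos P lp1) in Cl.
rewrite leqNgt; apply/negP => H.
have BL := Bm Csym Cd hA hB g hl.
have BLP := Bm Csym Cd hA hB g hlp; rewrite jmlp in BLP.
have BM := Bm Csym Cd hA hB g hm.
set I := (\sum_(u <- Defs.inord C w l) count_mem g (PL u))%N in H.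
have Ssplit : (\sum_(k <- iota 1 N | Sf l k) count_mem g (PL k) <=
   I + \sum_(k <- iota 1 N | Sf l k && ~~ ord_arrow C w k l) count_mem g (PL k))%N.
  rewrite (bigID (fun k => ord_arrow C w k l)) /= leq_add2r /I /Defs.inord big_filter.
  by apply: sum_sub => k _ /andP [].
have Slp : (count_mem g (PL m) +
    \sum_(k <- iota 1 N | Sf l k && ~~ ord_arrow C w k l) count_mem g (PL k) <=
    \sum_(k <- iota 1 N | Sf (jplus w l) k) count_mem g (PL k))%N.
  rewrite [X in (_ <= X)%N](bigID (pred1 m)) /=; apply: leq_add.
    apply: sum_elem; first by rewrite mem_iota add1n ltnS m1 mN.
    by rewrite eqxx andbT /Sf h3 h4 letlp CS Clm eqxx.
  apply: sum_sub => k; rewrite mem_iota add1n ltnS => /andP [k1 kN] /andP [/and3P [kl lk Ckl] na].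
  have : ~~ (jplus w k < jplus w l)%N.
    apply: contra na => hlt.
    by rewrite /ord_arrow k1 kN l1 lN Ckl kl lk hlt.
  rewrite -leqNgt => le.
  have neq : jplus w k != jplus w l.
    apply/eqP => e; have := letter_jplus (w := w) (j := k); rewrite e => /(_ lpN).
    rewrite letlp => ek; move: Ckl; rewrite -ek Cd => /eqP; discriminate.
  have lt : (jplus w l < jplus w k)%N by rewrite ltn_neqAle eq_sym neq le.
  by rewrite /Sf (ltn_trans kl (ltn_trans h2 h3)) lt letlp Ckl /= (ltn_eqF (ltn_trans kl h2)).
have SM : (count_mem g (PL l) <= \sum_(k <- iota 1 N | Sf m k) count_mem g (PL k))%N.
  apply: sum_elem; first by rewrite mem_iota add1n ltnS l1 lN.
  by rewrite /Sf h2 h3 Clm eqxx.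
have pmm : (count_mem g (PL (jminus w m)) <= I)%N.
  case: (posnP (jminus w m)) => [->|mm1] //.
  have mmN : (jminus w m <= N)%N by apply: leq_trans (ltnW (jminus_lt w m1)) mN.
  rewrite /I; apply: (sum_elem (P := predT)) => //.
  rewrite mem_filter mem_iota add1n ltnS mm1 mmN andbT.
  rewrite /ord_arrow mm1 mmN l1 lN (letter_jminus mm1) CS Clm eqxx h1 (jplus_jminus mm1 mN).
  by rewrite h2 h3.
clearbody I.
move: Cl H BL BLP BM Ssplit Slp SM pmm.
move: (\sum_(k <- iota 1 N | Sf l k) count_mem g (PL k)) => S1.
move: (\sum_(k <- iota 1 N | Sf (jplus w l) k) count_mem g (PL k)) => S2.
move: (\sum_(k <- iota 1 N | Sf m k) count_mem g (PL k)) => S3.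
move: (\sum_(k <- iota 1 N | Sf l k && ~~ ord_arrow C w k l) count_mem g (PL k)) => S4.
move: (count_mem g (PL l)) (count_mem g (PL (jplus w l))) (count_mem g (PL m)) => a b c.
move: (count_mem g (PL (jminus w l))) (count_mem g (PL (jminus w m))) => d e.
case: (beta C w l == g); case: (beta C w (jplus w l) == g); case: (beta C w m == g) => /=.
all: lia.
Qed.
End Main2.

Unset Implicit Arguments.

Theorem proposition6p6 (n : nat) (C : 'M[int]_n.+1) (w : seq 'I_n.+1)
    (P : nat -> seq 'rV[int]_n.+1) (l m : nat) :
  simply_laced_simple_cartan C ->
  reduced_expr_w0 C w ->
  propA C w P -> propB C w P -> propC C w P ->
  (1 <= l <= size w)%N -> (1 <= m <= size w)%N ->
  C (letter w l) (letter w m) = -1 ->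
  (jminus w m < l)%N -> (l < m)%N -> (m < jplus w l)%N -> (jplus w l < jplus w m)%N ->
  exists Q : {mpoly rat[n.+1]},
    linform (beta C w l) * Pin C w P l = Ppoly P l * Q.
Proof.
move=> [Cd _ Csym _ _] _ hA hB hC hl hm Clm h1 h2 h3 h4.
have [R HR] := sub_multiset (main_count Csym Cd hA hB hC hl hm Clm h1 h2 h3 h4).
exists (\prod_(b <- R) linform b).
rewrite (Ppoly_PL P l) -big_cat -(perm_big _ HR) /Lfull big_cons big_cat prod_flat /Pin.
rewrite (Ppoly_PL P (jplus w l)); congr (_ * (_ * _)).
by apply: eq_bigr => k _; rewrite Ppoly_PL.
Qed.
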